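(* Let $\xi>0$, $d>0$, $\delta>0$ and $n\in\mathbb{N}$ satisfy $\frac{d\xi^3-\delta}{2}n\geq1$. Let $H=(U\,\dot\cup\, V\,\dot\cup\, W,E)$ be a $3$-uniform hypergraph with $|U|=|V|=|W|=n$ such that $U,V,W$ are weakly $(\delta,d)$-quasirandom in $H$. Then at least $(1-\xi)3n$ vertices of $H$ can be covered by vertex-disjoint tight paths of length at least $\frac{d\xi^3-\delta}{2}n-2$.
   Context: For $V_1,V_2,V_3\subseteq V(H)$, $E(V_1,V_2,V_3)=\{(v_1,v_2,v_3)\in V_1\times V_2\times V_3: \{v_1,v_2,v_3\}\in E\}$ and $e(V_1,V_2,V_3)=|E(V_1,V_2,V_3)|$. The sets $V_1,V_2,V_3$ are weakly $(\delta,d)$-quasirandom in $H$ if for all $U_1\subseteq V_1,U_2\subseteq V_2,U_3\subseteq V_3$, $|e(U_1,U_2,U_3)-d|U_1||U_2||U_3||\leq\delta|V_1||V_2||V_3|$. A tight path of length $\ell$ (number of edges) is a 3-graph on distinct vertices $x_1,\dots,x_{\ell+2}$ with edges $x_ix_{i+1}x_{i+2}$, $i\in[\ell]$. *)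

(* Defs.v *)
From HB Require Import structures.
From mathcomp Require Import all_boot all_order all_algebra.
From mathcomp Require Import reals.
Set Implicit Arguments. Unset Strict Implicit. Unset Printing Implicit Defensive.
Import Order.TTheory GRing.Theory Num.Theory.
Local Open Scope ring_scope.

Definition uniform3 (T : finType) (E : {set {set T}}) : Prop :=
  forall e, e \in E -> #|e| = 3%N.

Definition Etrip (T : finType) (E : {set {set T}}) (V1 V2 V3 : {set T})
  : {set T * T * T} :=
  [set t : T * T * T | [&& t.1.1 \in V1, t.1.2 \in V2, t.2 \in V3 &
                          [set t.1.1; t.1.2; t.2] \in E]].

Definition etrip (T : finType) (E : {set {set T}}) (V1 V2 V3 : {set T}) : nat :=
  #|Etrip E V1 V2 V3|.

Definition weakly_quasirandom (R : realType) (T : finType) (E : {set {set T}})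
  (delta d : R) (V1 V2 V3 : {set T}) : Prop :=
  forall U1 U2 U3 : {set T}, U1 \subset V1 -> U2 \subset V2 -> U3 \subset V3 ->
    `| (etrip E U1 U2 U3)%:R - d * #|U1|%:R * #|U2|%:R * #|U3|%:R | <=
      delta * #|V1|%:R * #|V2|%:R * #|V3|%:R.

Definition tight_path (T : finType) (E : {set {set T}}) (s : seq T) : bool :=
  if s is x0 :: _ then
  [&& uniq s, (2 <= size s)%N &
      all (fun i => [set nth x0 s i; nth x0 s i.+1; nth x0 s i.+2] \in E)
          (iota 0 (size s).-2)]
  else false.

(* length = number of edges = number of vertices minus 2 *)
Definition tpath_length (T : Type) (s : seq T) : nat := (size s).-2.

(* Main.v *)
Require Import Defs.
From HB Require Import structures.
From mathcomp Require Import all_boot all_order all_algebra.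
From mathcomp Require Import reals.
From mathcomp Require Import zify.
Import Order.TTheory GRing.Theory Num.Theory.

Fixpoint tpE {T : finType} (E : {set {set T}}) (s : seq T) : bool :=
  match s with
  | x :: ((y :: z :: _) as r) => ([set x; y; z] \in E) && tpE E r
  | _ => true
  end.

Lemma all_tpE (T : finType) (E : {set {set T}}) (s : seq T) x0 :
  all (fun i => [set nth x0 s i; nth x0 s i.+1; nth x0 s i.+2] \in E)
      (iota 0 (size s).-2) = tpE E s.
Proof.
elim: s => [|x r IH] //=.
case: r IH => [|y [|z r']] IH //.
transitivity (([set x;y;z] \in E) && tpE E [:: y, z & r']); last by [].
rewrite -IH; rewrite [size _]/= [iota _ _]/= [all _ (_ :: _)]/=; congr andb.
rewrite -(addn0 1%N) iotaDl all_map; apply: eq_all => i /=.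
by [].
Qed.

Lemma tight_pathE (T : finType) (E : {set {set T}}) (s : seq T) :
  uniq s -> (2 <= size s)%N -> tpE E s -> tight_path E s.
Proof.
case: s => [|x r] // Hu Hs Ht.
by rewrite /tight_path Hu Hs all_tpE.
Qed.

Lemma set3_rot (T : finType) (a b c : T) : [set a; b; c] = [set b; c; a].
Proof. by apply/setP => x; rewrite !inE; case: (x == a); case: (x == b); case: (x == c). Qed.

Lemma pick_new {A B : finType} (X : {set A}) (f : A -> B) (s0 : seq B) :
  {in X &, injective f} -> (size s0 < #|X|)%N -> exists2 a, a \in X & f a \notin s0.
Proof.
move=> inj Hlt.
case: (boolP [exists a in X, f a \notin s0]) => [/existsP [a /andP [Ha Hf]]|H].
  by exists a.
exfalso; move: Hlt; apply/negP; rewrite -leqNgt.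
rewrite -(card_in_imset inj).
apply: (leq_trans _ (card_size s0)).
apply: subset_leq_card; apply/subsetP => b /imsetP [a Ha ->].
move/existsPn: H => /(_ a); by rewrite Ha /= negbK.
Qed.

Definition pr1 {T : Type} (t : T * T * T) := (t.1.1, t.1.2).
Definition pr2 {T : Type} (t : T * T * T) := (t.1.2, t.2).
Definition pr3 {T : Type} (t : T * T * T) := (t.1.1, t.2).

Definition ext {T : finType} (pr : T * T * T -> T * T) (G : {set T * T * T}) t :=
  #|[set s in G | pr s == pr t]|.

Definition closedk {T : finType} (k : nat) (G : {set T * T * T}) :=
  forall t, t \in G ->
    [/\ (k <= ext (@pr1 T) G t)%N, (k <= ext (@pr2 T) G t)%N & (k <= ext (@pr3 T) G t)%N].

Definition Phi {T : finType} (G : {set T * T * T}) :=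
  (#|(@pr1 T) @: G| + #|(@pr2 T) @: G| + #|(@pr3 T) @: G|)%N.

Lemma del_step {T : finType} (pr : T * T * T -> T * T) (F : {set T * T * T}) t :
  t \in F ->
  let F' := F :\: [set s in F | pr s == pr t] in
  [/\ (#|pr @: F'| < #|pr @: F|)%N,
      (forall pr' : T * T * T -> T * T, #|pr' @: F'| <= #|pr' @: F|)%N &
      #|F'| = (#|F| - ext pr F t)%N].
Proof.
move=> tF F'; split.
- apply: proper_card; apply/properP; split.
    by apply: imsetS; apply: subsetDl.
  exists (pr t); first by apply: imset_f.
  apply/imsetP => -[s]; rewrite /F' !inE => /andP [/negP H1 H2] H3.
  by apply: H1; rewrite H2 H3 eqxx.
- by move=> pr'; apply: subset_leq_card; apply: imsetS; apply: subsetDl.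
- rewrite /F' cardsD /ext (_ : F :&: _ = [set s in F | pr s == pr t]) //.
  by apply/setP => s; rewrite !inE; case: (s \in F).
Qed.

Lemma ext_gt0 {T : finType} (pr : T * T * T -> T * T) (F : {set T * T * T}) t :
  t \in F -> (0 < ext pr F t)%N.
Proof. by move=> tF; apply/card_gt0P; exists t; rewrite inE tF eqxx. Qed.

Lemma deletion (T : finType) (k N : nat) (F : {set T * T * T}) :
  (#|F| <= N)%N -> (k.-1 * Phi F < #|F|)%N ->
  exists2 G : {set T * T * T}, G \subset F & (exists t, t \in G) /\ closedk k G.
Proof.
elim: N F => [|N IH] F HN Hlt.
  by move: HN Hlt; rewrite leqn0 => /eqP ->.
case: (boolP [exists t in F, [|| ext (@pr1 T) F t < k, ext (@pr2 T) F t < k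
                                  | ext (@pr3 T) F t < k]%N]).
- case/existsP => t /andP [tF Hor].
  have gen : forall pr : T * T * T -> T * T,
      (pr = @pr1 T \/ pr = @pr2 T \/ pr = @pr3 T) -> (ext pr F t < k)%N ->
      exists2 G : {set T * T * T}, G \subset F & (exists t, t \in G) /\ closedk k G.
    move=> pr Hpr Hk.
    have [H1 H2 H3] := del_step pr F t tF.
    set F' := F :\: [set s in F | pr s == pr t] in H1 H2 H3.
    have Hp := ext_gt0 pr F t tF.
    have HPhi : (Phi F' < Phi F)%N.
      rewrite /Phi.
      have := H2 (@pr1 T); have := H2 (@pr2 T); have := H2 (@pr3 T).
      case: Hpr => [->|[->|->]] in H1 *; lia.
    have HM : (k.-1 * Phi F' + k.-1 <= k.-1 * Phi F)%N.
      by rewrite -mulnSr leq_mul2l HPhi orbT.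
    have [G GF HG] : exists2 G : {set T * T * T}, G \subset F' & (exists t, t \in G) /\ closedk k G.
      apply: IH; lia.
    exists G => //; apply: (subset_trans GF); exact: subsetDl.
  by case/or3P: Hor => Hk; [apply: (gen (@pr1 T)) | apply: (gen (@pr2 T)) | apply: (gen (@pr3 T))];
     auto.
- move/existsPn => H; exists F => //; split.
    have : (0 < #|F|)%N by exact: leq_ltn_trans (leq0n _) Hlt.
    by case/card_gt0P => t tF; exists t.
  move=> t tF; move: (H t); rewrite tF /= !negb_or -!leqNgt.
  by case/and3P.
Qed.

Lemma disjN {T : finType} {A B : {set T}} {x} : [disjoint A & B] -> x \in A -> (x \in B) = false.
Proof. exact: disjointFr. Qed.

Lemma ext1 {T : finType} k (G : {set T * T * T}) u v w (s0 : seq T) :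
  closedk k G -> (u, v, w) \in G -> (size s0 < k)%N ->
  exists w0, (u, v, w0) \in G /\ w0 \notin s0.
Proof.
move=> Hc Ht Hs; have [H1 _ _] := Hc _ Ht.
have [a] := @pick_new _ _ [set s in G | pr1 s == pr1 (u, v, w)] (fun s => s.2) s0
  ltac:(move=> [[a1 a2] a3] [[b1 b2] b3]; rewrite !inE /pr1 /= =>
        /andP [_ /eqP [? ?]] /andP [_ /eqP [? ?]] ?; subst; done)
  (leq_trans Hs H1).
case: a => [[a1 a2] a3]; rewrite inE /pr1 /= => /andP [HG /eqP [? ?]] Hn; subst.
by exists a3.
Qed.

Lemma ext2 {T : finType} k (G : {set T * T * T}) u v w (s0 : seq T) :
  closedk k G -> (u, v, w) \in G -> (size s0 < k)%N ->
  exists v0, (u, v0, w) \in G /\ v0 \notin s0.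
Proof.
move=> Hc Ht Hs; have [_ _ H1] := Hc _ Ht.
have [a] := @pick_new _ _ [set s in G | pr3 s == pr3 (u, v, w)] (fun s => s.1.2) s0
  ltac:(move=> [[a1 a2] a3] [[b1 b2] b3]; rewrite !inE /pr3 /= =>
        /andP [_ /eqP [? ?]] /andP [_ /eqP [? ?]] ?; subst; done)
  (leq_trans Hs H1).
case: a => [[a1 a2] a3]; rewrite inE /pr3 /= => /andP [HG /eqP [? ?]] Hn; subst.
by exists a2.
Qed.

Lemma ext3 {T : finType} k (G : {set T * T * T}) u v w (s0 : seq T) :
  closedk k G -> (u, v, w) \in G -> (size s0 < k)%N ->
  exists u0, (u0, v, w) \in G /\ u0 \notin s0.
Proof.
move=> Hc Ht Hs; have [_ H1 _] := Hc _ Ht.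
have [a] := @pick_new _ _ [set s in G | pr2 s == pr2 (u, v, w)] (fun s => s.1.1) s0
  ltac:(move=> [[a1 a2] a3] [[b1 b2] b3]; rewrite !inE /pr2 /= =>
        /andP [_ /eqP [? ?]] /andP [_ /eqP [? ?]] ?; subst; done)
  (leq_trans Hs H1).
case: a => [[a1 a2] a3]; rewrite inE /pr2 /= => /andP [HG /eqP [? ?]] Hn; subst.
by exists a1.
Qed.

Lemma inG {T : finType} {E : {set {set T}}} {U' V' W' : {set T}} {G : {set T * T * T}} {a b c} :
  G \subset Etrip E U' V' W' -> (a, b, c) \in G ->
  [/\ a \in U', b \in V', c \in W' & [set a; b; c] \in E].
Proof.
move=> /subsetP H /H; rewrite /Etrip inE /=.
by case/and4P.
Qed.

Lemma notin_filter {T : finType} {A : {set T}} {s : seq T} {x} :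
  x \in A -> x \notin filter (fun y => y \in A) s -> x \notin s.
Proof. by move=> xA; rewrite mem_filter xA. Qed.

Lemma build {T : finType} (E : {set {set T}}) (U' V' W' : {set T}) (G : {set T * T * T}) (k : nat) :
  [disjoint U' & V'] -> [disjoint U' & W'] -> [disjoint V' & W'] ->
  G \subset Etrip E U' V' W' -> closedk k G -> (exists t, t \in G) ->
  forall j, (0 < j <= k)%N -> exists s : seq T,
   [/\ size s = (3 * j)%N, uniq s, tpE E s,
       (exists u v w r, s = u :: v :: w :: r /\ (u, v, w) \in G) &
       [/\ count (fun x => x \in U') s = j, count (fun x => x \in V') s = j,
       count (fun x => x \in W') s = j & all (fun x => x \in U' :|: V' :|: W') s]].
Proof.
move=> dUV dUW dVW GE Hc [t0 Ht0].
elim=> [|j IH] //.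
case: j IH => [|j] IH Hj.
  move: Ht0; case: t0 => [[u v] w] Ht0.
  have [Hu Hv Hw HE] := inG GE Ht0.
  exists [:: u; v; w]; split => //.
  - have H1 : (u == v) = false by apply/eqP => Heq; move: Hv; rewrite -Heq (disjN dUV Hu).
    have H2 : (u == w) = false by apply/eqP => Heq; move: Hw; rewrite -Heq (disjN dUW Hu).
    have H3 : (v == w) = false by apply/eqP => Heq; move: Hw; rewrite -Heq (disjN dVW Hv).
    by rewrite /= !inE H1 H2 H3.
  - by rewrite /= HE.
  - by exists u, v, w, [::].
  split; last by rewrite /= !inE Hu Hv Hw !orbT.
  - by rewrite /= Hu (disjointFl dUV Hv) (disjointFl dUW Hw).
  - by rewrite /= Hv (disjN dUV Hu) (disjointFl dVW Hw).
  - by rewrite /= Hw (disjN dUW Hu) (disjN dVW Hv).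
have [s [Hsz Hun Htp [u [v [w [r [Hs Huvw]]]]] [cU cV cW Hall]]] :=
  IH ltac:(case/andP: Hj => _ Hj; apply/andP; split => //; exact: ltnW).
have Hjk : (j.+1 < k)%N by case/andP: Hj.
have [w0 [G1 Hw0]] := @ext1 _ k G u v w (filter (fun x => x \in W') s) Hc Huvw
   ltac:(by rewrite size_filter cW).
have [Hu1 Hv1 Hw01 HE1] := inG GE G1.
have Hw0s := notin_filter Hw01 Hw0.
have [v0 [G2 Hv0]] := @ext2 _ k G u v w0 (filter (fun x => x \in V') s) Hc G1
   ltac:(by rewrite size_filter cV).
have [_ Hv02 _ HE2] := inG GE G2.
have Hv0s := notin_filter Hv02 Hv0.
have [u0 [G3 Hu0]] := @ext3 _ k G u v0 w0 (filter (fun x => x \in U') s) Hc G2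
   ltac:(by rewrite size_filter cU).
have [Hu03 _ _ HE3] := inG GE G3.
have Hu0s := notin_filter Hu03 Hu0.
have H1 : (u0 == v0) = false by apply/eqP => Heq; move: Hv02; rewrite -Heq (disjN dUV Hu03).
have H2 : (u0 == w0) = false by apply/eqP => Heq; move: Hw01; rewrite -Heq (disjN dUW Hu03).
have H3 : (v0 == w0) = false by apply/eqP => Heq; move: Hw01; rewrite -Heq (disjN dVW Hv02).
have HE2' : [set v0; w0; u] \in E by rewrite -set3_rot.
have HE1' : [set w0; u; v] \in E by rewrite -set3_rot -set3_rot.
exists [:: u0, v0, w0 & s]; split.
- by rewrite /= Hsz (mulnS 3 j.+1).
- by rewrite /= !in_cons H1 H2 H3 (negbTE Hu0s) (negbTE Hv0s) (negbTE Hw0s) Hun.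
- move: Htp; rewrite Hs /= HE3 HE2' HE1' /=; exact: id.
- by exists u0, v0, w0, s.
split.
- by rewrite /= cU Hu03 (disjointFl dUV Hv02) (disjointFl dUW Hw01).
- by rewrite /= cV Hv02 (disjN dUV Hu03) (disjointFl dVW Hw01).
- by rewrite /= cW Hw01 (disjN dUW Hu03) (disjN dVW Hv02).
- by rewrite /= Hall !inE Hu03 Hv02 Hw01 !orbT.
Qed.

From mathcomp Require Import ring lra.
Local Open Scope ring_scope.

Lemma card_count {T : finType} (A : {set T}) (s : seq T) :
  uniq s -> #|A :&: [set x | x \in s]| = count (fun x => x \in A) s.
Proof.
move=> us.
rewrite (_ : A :&: [set x | x \in s] = [set x | x \in filter (fun x => x \in A) s]).
  rewrite cardsE -size_filter; apply/card_uniqP; exact: filter_uniq.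
by apply/setP => x; rewrite !inE mem_filter andbC.
Qed.

Lemma Phi_le {T : finType} (E : {set {set T}}) (U' V' W' : {set T}) m :
  #|U'| = m -> #|V'| = m -> #|W'| = m -> (Phi (Etrip E U' V' W') <= 3 * (m * m))%N.
Proof.
move=> hU hV hW.
have H : forall (A B : {set T}) (pr : T * T * T -> T * T),
   #|A| = m -> #|B| = m ->
   (forall t, t \in Etrip E U' V' W' -> (pr t).1 \in A /\ (pr t).2 \in B) ->
   (#|pr @: Etrip E U' V' W'| <= m * m)%N.
  move=> A B pr hA hB Hp.
  apply: (@leq_trans #|setX A B|); last by rewrite cardsX hA hB.
  apply: subset_leq_card; apply/subsetP => p /imsetP [t Ht ->].
  by have [h1 h2] := Hp t Ht; rewrite inE h1 h2.
have Hin : forall t, t \in Etrip E U' V' W' -> [/\ t.1.1 \in U', t.1.2 \in V' & t.2 \in W'].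
  by move=> t; rewrite inE => /and4P [].
rewrite /Phi.
have := H U' V' (@pr1 T) hU hV ltac:(by move=> t /Hin []).
have := H V' W' (@pr2 T) hV hW ltac:(by move=> t /Hin []).
have := H U' W' (@pr3 T) hU hW ltac:(by move=> t /Hin []).
move=> h3 h2 h1.
rewrite mulSn mul2n -addnn addnA; apply: leq_add; first apply: leq_add; done.
Qed.

Lemma findpath (R : realType) (xi d delta : R) (n : nat) (T : finType) (E : {set {set T}})
  (U V W U' V' W' : {set T}) (m : nat) :
  0 < xi -> 0 < d -> 1 <= (d * xi ^+ 3 - delta) / 2 * n%:R ->
  [disjoint U & V] -> [disjoint U & W] -> [disjoint V & W] ->
  #|U| = n -> #|V| = n -> #|W| = n ->
  weakly_quasirandom E delta d U V W ->
  U' \subset U -> V' \subset V -> W' \subset W -> #|U'| = m -> #|V'| = m -> #|W'| = m ->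
  xi * n%:R <= m%:R ->
  exists s j, [/\ (0 < j)%N, (d * xi ^+ 3 - delta) / 2 * n%:R <= (3 * j)%:R,
                  size s = (3 * j)%N, uniq s & tight_path E s] /\
     [/\ count (fun x => x \in U') s = j, count (fun x => x \in V') s = j,
         count (fun x => x \in W') s = j & all (fun x => x \in U' :|: V' :|: W') s].
Proof.
move=> xi0 d0 HL dUV dUW dVW hU hV hW Hq sU sV sW hU' hV' hW' hxm.
set L := (d * xi ^+ 3 - delta) / 2 * n%:R in HL *.
have n0 : (0 < n)%N.
  case: n @L HL {hxm hU hV hW} => [|n'] //=; by rewrite mulr0 ler10.
set N := (n%:R : R).
have N1 : 1 <= N by rewrite /N ler1n.
have hL0 : 0 <= L / 3 by lra.
set t := Num.truncn (L / 3).
have ha : t%:R <= L / 3 by rewrite truncn_le.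
have hb : L / 3 < t.+1%:R := truncnS_gt _.
set F := Etrip E U' V' W'.
have hm : (m <= n)%N by rewrite -hU' -hU; apply: subset_leq_card.
have hmR : m%:R <= N by rewrite ler_nat.
have he : d * (m%:R ^+ 3) - delta * N ^+ 3 <= (#|F|)%:R.
  have := Hq U' V' W' sU sV sW; rewrite hU' hV' hW' hU hV hW ler_norml.
  case/andP => h1 _; rewrite /etrip -/F in h1.
  have -> : m%:R ^+ 3 = m%:R * m%:R * m%:R :> R by rewrite !exprS expr0 mulr1 mulrA.
  have -> : N ^+ 3 = N * N * N by rewrite !exprS expr0 mulr1 mulrA.
  rewrite !mulrA; lra.
have hm3 : (xi * N) ^+ 3 <= m%:R ^+ 3.
  by apply: lerXn2r => //; rewrite nnegrE // mulr_ge0 // ltW.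
have hF : 2 * L * N ^+ 2 <= (#|F|)%:R.
  apply: le_trans he.
  have : d * (xi * N) ^+ 3 <= d * m%:R ^+ 3 by rewrite ler_pM2l.
  have -> : 2 * L * N ^+ 2 = d * (xi * N) ^+ 3 - delta * N ^+ 3.
    by rewrite /L /N; field.
  lra.
have hPhi : ((Phi F)%:R : R) <= 3 * N ^+ 2.
  have := @Phi_le T E U' V' W' m hU' hV' hW'; rewrite -(ler_nat R) natrM natrM => h.
  apply: (le_trans h); rewrite expr2; apply: ler_wpM2l => //.
  by apply: ler_pM.
have hdel : (t * Phi F < #|F|)%N.
  rewrite -(ltr_nat R) natrM.
  apply: (le_lt_trans (y := (L / 3) * (3 * N ^+ 2))).
    by apply: ler_pM.
  have hLN : 0 < L * N ^+ 2 by apply: mulr_gt0; [lra | apply: exprn_gt0; lra].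
  lra.
case: (@deletion T t.+1 #|F| F (leqnn _) hdel) => G GF [HG Hc].
have GE : G \subset Etrip E U' V' W' by [].
have [s [Hsz Hun Htp _ [cU cV cW Hall]]] :=
  @build T E U' V' W' G t.+1 (disjointW sU sV dUV) (disjointW sU sW dUW) (disjointW sV sW dVW)
    GE Hc HG t.+1 ltac:(by rewrite leqnn).
exists s, t.+1; split; split => //.
- by move: hb; clear; rewrite natrM => hb; lra.
- by apply: tight_pathE => //; rewrite Hsz mulnS.
Qed.

Lemma outer (R : realType) (xi d delta : R) (n : nat) (T : finType) (E : {set {set T}})
  (U V W : {set T}) :
  0 < xi -> 0 < d -> 1 <= (d * xi ^+ 3 - delta) / 2 * n%:R ->
  [disjoint U & V] -> [disjoint U & W] -> [disjoint V & W] ->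
  #|U| = n -> #|V| = n -> #|W| = n ->
  weakly_quasirandom E delta d U V W ->
  forall m (U' V' W' : {set T}),
  U' \subset U -> V' \subset V -> W' \subset W -> #|U'| = m -> #|V'| = m -> #|W'| = m ->
  exists P : seq (seq T),
    [/\ uniq (flatten P),
        (forall p, p \in P -> tight_path E p /\
           (d * xi ^+ 3 - delta) / 2 * n%:R <= (size p)%:R),
        (forall x, x \in flatten P -> x \in U' :|: V' :|: W') &
        3 * m%:R - 3 * (xi * n%:R) <= (size (flatten P))%:R].
Proof.
move=> xi0 d0 HL dUV dUW dVW hU hV hW Hq.
elim/ltn_ind => m IH U' V' W' sU sV sW hU' hV' hW'.
case: (ltrP (m%:R) (xi * n%:R)) => hxm.
  exists [::]; split => //=; lra.
have [s [j [[j0 HLj Hsz Hun Htp] [cU cV cW Hall]]]] :=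
  @findpath R xi d delta n T E U V W U' V' W' m xi0 d0 HL dUV dUW dVW hU hV hW Hq
     sU sV sW hU' hV' hW' hxm.
set S := [set x | x \in s].
have cardD : forall A : {set T}, #|A :\: S| = (#|A| - count (fun x => x \in A) s)%N.
  by move=> A; rewrite cardsD card_count.
have hjm : (j <= m)%N.
  have := subset_leq_card (subsetIl U' S); by rewrite card_count // cU hU'.
have [P' [HuP HpP HinP HsP]] := IH (m - j)%N ltac:(by rewrite ltn_subrL j0 /=; exact: leq_trans j0 hjm)
   (U' :\: S) (V' :\: S) (W' :\: S)
   (subset_trans (subsetDl _ _) sU) (subset_trans (subsetDl _ _) sV)
   (subset_trans (subsetDl _ _) sW)
   ltac:(by rewrite cardD hU' cU) ltac:(by rewrite cardD hV' cV) ltac:(by rewrite cardD hW' cW).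
exists (s :: P'); split.
- rewrite /= cat_uniq Hun HuP andbT /=; apply/hasPn => x /HinP.
  by rewrite !inE; case/orP => [/orP [] | ] /andP [].
- move=> p; rewrite inE => /orP [/eqP -> | /HpP //].
  by rewrite Hsz.
- move=> x; rewrite /= mem_cat => /orP [xs | /HinP].
    by move/allP: Hall => /(_ x xs).
  by rewrite !inE; case/orP => [/orP [] | ] /andP [_ ->]; rewrite ?orbT.
- rewrite /= size_cat natrD Hsz.
  move: HsP; rewrite natrB // natrM => HsP.
  lra.
Qed.

Lemma natr_pred2 (R : realType) (k : nat) : (k%:R : R) - 2 <= (k.-2)%:R.
Proof.
case: k => [|[|k]] /=; first (rewrite ?mulr0n; lra).
  rewrite ?mulr0n; lra.
rewrite -[k.+2]addn2 natrD; lra.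
Qed.

Theorem lemma6p2 (R : realType) (xi d delta : R) (n : nat)
  (T : finType) (E : {set {set T}}) (U V W : {set T}) :
  0 < xi -> 0 < d -> 0 < delta ->
  1 <= (d * xi ^+ 3 - delta) / 2 * n%:R ->
  uniform3 E ->
  [set: T] = U :|: V :|: W ->
  [disjoint U & V] -> [disjoint U & W] -> [disjoint V & W] ->
  #|U| = n -> #|V| = n -> #|W| = n ->
  weakly_quasirandom E delta d U V W ->
  exists P : seq (seq T),
    [/\ uniq (flatten P),
        (forall p, p \in P -> tight_path E p /\
           (d * xi ^+ 3 - delta) / 2 * n%:R - 2 <= (tpath_length p)%:R) &
        (1 - xi) * (3 * n%:R) <= (size (flatten P))%:R].
Proof.
move=> xi0 d0 de0 HL _ _ dUV dUW dVW hU hV hW Hq.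
have [P [HuP HpP _ HsP]] := @outer R xi d delta n T E U V W xi0 d0 HL dUV dUW dVW hU hV hW Hq
  n U V W (subxx _) (subxx _) (subxx _) hU hV hW.
exists P; split => //.
  move=> p /HpP [Htp Hs]; split => //.
  rewrite /tpath_length; apply: le_trans (natr_pred2 R (size p)); lra.
have -> : (1 - xi) * (3 * n%:R) = 3 * n%:R - 3 * (xi * n%:R) :> R by ring.
exact: HsP.
Qed.
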